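(* Let $a_1,a_2,a_3$ be distinct positive integers and let $m_1,m_2$ be distinct positive integers. Then there exists a permutation $\pi$ of $\{1,2,3\}$ such that $$(a_{\pi(1)}-m_1)(a_{\pi(1)}-m_2)(a_{\pi(1)}+a_{\pi(2)}-m_1)(a_{\pi(1)}+a_{\pi(2)}-m_2)\neq 0.$$ *)

(* Defs.v *)
From mathcomp Require Import all_boot all_order all_algebra all_fingroup.

(* Main.v *)
Require Import Defs.
From mathcomp Require Import all_boot all_order all_algebra all_fingroup.
From mathcomp Require Import zify.
From Stdlib Require Import Classical.
Import GRing.Theory Num.Theory.
Local Open Scope ring_scope.
Ltac atom_lia := repeat match goal with H : _ \/ _ |- _ => clear H end; lia.
Lemma arith (x y z m1 m2 : int) : 0 < x -> 0 < y -> 0 < z -> 0 < m1 -> 0 < m2 -> m1 <> m2 ->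
  x <> y -> y <> z -> x <> z ->
  (x = m1 \/ x = m2 \/ x + y = m1 \/ x + y = m2) ->
  (x = m1 \/ x = m2 \/ x + z = m1 \/ x + z = m2) ->
  (y = m1 \/ y = m2 \/ y + x = m1 \/ y + x = m2) ->
  (y = m1 \/ y = m2 \/ y + z = m1 \/ y + z = m2) ->
  (z = m1 \/ z = m2 \/ z + x = m1 \/ z + x = m2) ->
  (z = m1 \/ z = m2 \/ z + y = m1 \/ z + y = m2) -> False.
Proof. intros. (repeat match goal with H: _ \/ _ |- _ => destruct H; try solve [atom_lia] end). Qed.

Lemma permex (i j : 'I_3) : i != j -> exists pi : 'S_3, pi ord0 = i /\ pi (lift ord0 ord0) = j.
Proof.
move=> ij.
set t1 := tperm ord0 i.
set j' := t1 j.
have j'0 : ord0 != j'.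
  apply/eqP=> e. have : t1 j' = t1 ord0 by rewrite e.
  by rewrite /j' tpermK tpermL => /eqP; rewrite eq_sym (negbTE ij).
exists (tperm (lift ord0 ord0) j' * t1)%g.
set s := tperm (lift ord0 ord0) j'.
have s0 : s ord0 = ord0 by rewrite /s tpermD // eq_sym.
split; first by rewrite permM s0 /t1 tpermL.
by rewrite permM /s tpermL /j' tpermK.
Qed.

Lemma prodne (x y m1 m2 : int) : ~ (x = m1 \/ x = m2 \/ x + y = m1 \/ x + y = m2) ->
  (x - m1) * (x - m2) * (x + y - m1) * (x + y - m2) != 0.
Proof.
move=> H; rewrite !mulf_eq0 !subr_eq0; apply/negP => /orP[/orP[/orP[]|]|] /eqP e; apply: H; tauto.
Qed.

Theorem theorem1 (a : 'I_3 -> int) (m1 m2 : int)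
  (ha_pos : forall i, 0 < a i) (ha_inj : injective a)
  (hm1 : 0 < m1) (hm2 : 0 < m2) (hm : m1 != m2) :
  exists pi : 'S_3,
    (a (pi ord0) - m1) * (a (pi ord0) - m2)
    * (a (pi ord0) + a (pi (lift ord0 ord0)) - m1)
    * (a (pi ord0) + a (pi (lift ord0 ord0)) - m2) != 0.
Proof.
have key : forall i j : 'I_3, i != j ->
    ~ (a i = m1 \/ a i = m2 \/ a i + a j = m1 \/ a i + a j = m2) ->
  exists pi : 'S_3,
    (a (pi ord0) - m1) * (a (pi ord0) - m2)
    * (a (pi ord0) + a (pi (lift ord0 ord0)) - m1)
    * (a (pi ord0) + a (pi (lift ord0 ord0)) - m2) != 0.
  move=> i j ij H; have [pi [e0 e1]] := permex i j ij; exists pi; rewrite e0 e1; exact: prodne.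
pose i0 : 'I_3 := ord0. pose i1 : 'I_3 := lift ord0 ord0. pose i2 : 'I_3 := ord_max.
have n01 : i0 != i1 by []. have n02 : i0 != i2 by []. have n12 : i1 != i2 by [].
have d : forall i j : 'I_3, i != j -> a i <> a j.
  by move=> i j /eqP ij e; apply: ij; apply: ha_inj.
have hm' : m1 <> m2 by apply/eqP.
have P0 := ha_pos i0; have P1 := ha_pos i1; have P2 := ha_pos i2.
have D01 := d _ _ n01; have D02 := d _ _ n02; have D12 := d _ _ n12.
have n10 : i1 != i0 by []. have n20 : i2 != i0 by []. have n21 : i2 != i1 by [].
apply: Classical_Prop.NNPP => Hn.
have G : forall i j : 'I_3, i != j -> (a i = m1 \/ a i = m2 \/ a i + a j = m1 \/ a i + a j = m2).
  by move=> i j ij; apply: Classical_Prop.NNPP => h; apply: Hn; exact: key i j ij h.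
have D10 : a i1 <> a i0 by move=> e; apply: D01.
have A := @arith _ _ _ _ _ P0 P1 P2 hm1 hm2 hm' D01 D12 D02. have B := A (G _ _ n01) (G _ _ n02) (G _ _ n10). have C := B (G _ _ n12) (G _ _ n20). exact: C (G _ _ n21).
Qed.
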